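(* Let $p$ be a positive integer, $H$ a graph, $T$ a complete rooted ternary tree and $V\subseteq V(T(H))$ with $|OC(T,V)|>p$. Then there exists a minimal sequence of largest subtrees of $T$ with respect to $V$ lacking $p$.
   Context: Complete rooted ternary tree: rooted tree in which all root-leaf paths have the same number of edges and every non-leaf vertex has exactly 3 children. Graph $T(H)$: for $V(H)=\{1,\dots,m\}$, vertices $v^i$ ($v\in V(T)$, $1\le i\le m$), each $\{v^1,\dots,v^m\}$ spanning a copy $H^v$ of $H$, plus edges $u^iv^i$ for $uv\in E(T)$; for a subtree $T'$ of $T$, $T'(H)$ is the subgraph induced by the copies $H^v$, $v\in V(T')$. For $V\subseteq V(T(H))$, $OC(T,V)=\{u\in V(T): V(H^u)\cap V\neq\emptyset\}$. An immediate subtree of $T$ is the subtree consisting of a child of the root and all its descendants; an immediate subtree $T'$ is largest with respect to $V$ if $|OC(T,V)\cap V(T')|$ is maximum among the immediate subtrees. A sequence of largest subtrees of $T$ w.r.t. $V$ is $T_1,\dots,T_q$ with $T_1=T$, $V_1=V$, and for $i<q$, $T_{i+1}$ a largest immediate subtree of $T_i$ w.r.t. $V_i$ and $V_{i+1}=V_i\cap V(T_{i+1}(H))$. It is a minimal sequence lacking $p$ if $|OC(T_1,V_1)|-|OC(T_q,V_q)|\geq p$ while $|OC(T_1,V_1)|-|OC(T_{q-1},V_{q-1})|<p$. *)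

(* Defs.v *)
From mathcomp Require Import all_boot.
Set Implicit Arguments. Unset Strict Implicit. Unset Printing Implicit Defensive.

(* Complete rooted ternary tree of depth d (all root-leaf paths have d edges).
   A vertex is the path from the root, a sequence of child indices in 'I_3
   (root = [::]); the children of w are rcons w c, c : 'I_3.
   tverts d enumerates all vertices (sequences of length <= d). *)
Fixpoint tverts (d : nat) : seq (seq 'I_3) :=
  if d is d'.+1 then [::] :: [seq c :: s | c <- enum 'I_3, s <- tverts d']
  else [:: [::]].

(* A subtree of T is identified with its root w: it consists of the
   vertices u of T having w as a prefix.  Vertices of T(H) are pairs
   (u, i) with u a vertex of T and i : 'I_m a vertex of H.
   OC d V w = OC(T_w, V ∩ V(T_w(H))): vertices u of the subtree T_w whose
   copy H^u meets V. *)
Definition OC (d m : nat) (V : pred (seq 'I_3 * 'I_m)) (w : seq 'I_3)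
  : seq (seq 'I_3) :=
  [seq u <- tverts d | prefix w u & [exists i : 'I_m, V (u, i)]].

(* The subtree rooted at rcons w c (c : 'I_3) is an immediate subtree of the
   subtree rooted at w (w non-leaf, i.e. size w < d); it is largest w.r.t. V. *)
Definition largest_child (d m : nat) (V : pred (seq 'I_3 * 'I_m))
  (w : seq 'I_3) (c : 'I_3) : Prop :=
  size w < d /\
  forall c' : 'I_3, size (OC d V (rcons w c')) <= size (OC d V (rcons w c)).

Definition seq_largest (d m : nat) (V : pred (seq 'I_3 * 'I_m))
  (ws : seq (seq 'I_3)) : Prop :=
  ohead ws = Some [::] /\
  forall i, i.+1 < size ws ->
    exists c : 'I_3, nth [::] ws i.+1 = rcons (nth [::] ws i) c /\
                     largest_child d V (nth [::] ws i) c.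

Definition minimal_seq_lacking (d m : nat) (V : pred (seq 'I_3 * 'I_m))
  (p : nat) (ws : seq (seq 'I_3)) : Prop :=
  seq_largest d V ws /\ 2 <= size ws /\
  p <= size (OC d V [::]) - size (OC d V (nth [::] ws (size ws).-1)) /\
  size (OC d V [::]) - size (OC d V (nth [::] ws (size ws).-2)) < p.

(* Main.v *)
Require Import Defs.
From mathcomp Require Import all_boot zify.

Lemma tverts_size d u : u \in tverts d -> size u <= d.
Proof.
elim: d u => [|d IH] u /=; first by rewrite inE => /eqP ->.
rewrite inE => /orP[/eqP -> //|/allpairsP[[c s] [_ Hs ->]]] /=.
by rewrite ltnS IH.
Qed.

Lemma tverts_uniq d : uniq (tverts d).
Proof.
elim: d => [|d IH] //=.
rewrite allpairs_uniq ?enum_uniq // ?andbT.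
  by apply/negP => /allpairsP[[c s] [_ _ /=]].
by move=> [c s] [c' s'] _ _ /= [-> ->].
Qed.

Lemma leaf_OC d m (V : pred (seq 'I_3 * 'I_m)) w :
  size w = d -> size (OC d V w) <= 1.
Proof.
move=> Hw; rewrite /OC size_filter.
set P := (fun u : seq 'I_3 => _).
rewrite (@eq_in_count _ _ (fun u => P u && (u == w))); last first.
  move=> u Hu; rewrite /P; case Hp: (prefix w u) => //=.
  move: Hp; rewrite prefixE Hw take_oversize ?tverts_size // => /eqP ->.
  by rewrite eqxx andbT.
apply: leq_trans (_ : count (pred1 w) (tverts d) <= 1).
  by apply: sub_count => u /andP[].
by rewrite count_uniq_mem ?tverts_uniq // leq_b1.
Qed.

Section Greedy.
Variables (d m : nat) (V : pred (seq 'I_3 * 'I_m)).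
Definition best (w : seq 'I_3) : 'I_3 :=
  [arg max_(c > ord0) size (OC d V (rcons w c))].
Fixpoint gp k : seq 'I_3 := if k is k'.+1 then rcons (gp k') (best (gp k')) else [::].
Lemma size_gp k : size (gp k) = k.
Proof. by elim: k => //= k IH; rewrite size_rcons IH. Qed.
Lemma best_max w c : size (OC d V (rcons w c)) <= size (OC d V (rcons w (best w))).
Proof. rewrite /best; case: arg_maxnP => // i _ Hi; exact: Hi. Qed.
End Greedy.

Theorem lemma4 (p : nat) (m : nat) (H : rel 'I_m)
  (Hsym : symmetric H) (Hirr : irreflexive H)
  (d : nat) (V : pred (seq 'I_3 * 'I_m))
  (HV : forall x, V x -> x.1 \in tverts d) :
  0 < p -> p < size (OC d V [::]) ->
  exists ws : seq (seq 'I_3), minimal_seq_lacking d V p ws.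
Proof.
move=> p0 pN.
set N := size (OC d V [::]).
set f := fun k => size (OC d V (gp d m V k)).
have exP : exists k, p <= N - f k.
  exists d; have Hl : f d <= 1 by apply: leaf_OC; exact: size_gp.
  move: Hl pN; rewrite -/N; lia.
case: (ex_minnP exP) => k Hk Hmin.
have kd : k <= d.
  apply: Hmin; have Hl : f d <= 1 by apply: leaf_OC; exact: size_gp.
  move: Hl pN; rewrite -/N; lia.
have k0 : 0 < k.
  case: k Hk {Hmin kd} => //; rewrite /f /= subnn.
  by rewrite leqn0 => /eqP p0'; rewrite p0' in p0.
exists (mkseq (gp d m V) k.+1).
rewrite /minimal_seq_lacking size_mkseq /=.
split; [split|split; [by []|split]].
- by [].
- move=> i; rewrite size_mkseq => Hi.
  exists (best d m V (gp d m V i)).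
  rewrite !nth_mkseq ?(ltnW Hi) //; split => //; split.
    by rewrite size_gp (leq_trans _ kd).
  by move=> c'; apply: best_max.
- by rewrite nth_mkseq.
- rewrite nth_mkseq; last by case: k k0 {Hk Hmin kd}.
  rewrite ltnNge; apply/negP => Hc.
  have := Hmin _ Hc; case: k k0 {Hk Hmin kd Hc} => //= k _.
  by rewrite ltnn.
Qed.
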